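(* Let $R = \bigoplus_{n \ge 0} R_n$ be a Noetherian standard graded ring over a local Artinian ring $R_0$, and let $E$ be a finitely generated graded $R$-module with $\dim E = 0$. Let $d$ be the maximal degree of a minimal homogeneous generator of $E$, let $e = \ell(E)$, and let $q = \sum_{i \le d} \ell(E_i)$. Then: (i) $\operatorname{reg}(E) \le d + e - q$; (ii) $\operatorname{reg}(E) = d + e - q$ if and only if $\ell(E_t) = 1$ for all $d+1 \le t \le d+e-q$ and $\ell(E_t) = 0$ for all $t \ge d+e-q+1$.
   Context: $R_+ = \bigoplus_{n>0}R_n$. For a finitely generated graded $R$-module $E$ of dimension $r$, $a_i(E) = \sup\{n \mid H^i_{R_+}(E)_n \ne 0\}$ and $\operatorname{reg}(E) = \max\{a_i(E)+i \mid 0 \le i \le r\}$. Lengths $\ell$ are over $R_0$. *)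

(* Defs.v *)
From mathcomp Require Import all_boot all_order all_algebra.
Set Implicit Arguments. Unset Strict Implicit. Unset Printing Implicit Defensive.
Import Order.TTheory GRing.Theory Num.Theory.
Local Open Scope ring_scope.

Section RingDefs.
Variable R : comNzRingType.

Definition ideal (I : {pred R}) :=
  [/\ 0 \in I, (forall x y, x \in I -> y \in I -> x + y \in I)
    & (forall r x, x \in I -> r * x \in I)].

Definition fg_ideal (I : {pred R}) :=
  exists s : seq R, forall x, x \in I <->
    exists c : nat -> R, x = \sum_(i < size s) c i * s`_i.

Definition noetherian_ring := forall I : {pred R}, ideal I -> fg_ideal I.

Definition prime_ideal (P : {pred R}) :=
  [/\ ideal P, 1 \notin P & forall a b, a * b \in P -> a \in P \/ b \in P].

Variable Rd : nat -> {pred R}.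

Definition graded_ring :=
  [/\ (forall n, 0 \in Rd n /\ forall x y, x \in Rd n -> y \in Rd n -> x - y \in Rd n),
      1 \in Rd 0,
      (forall m n x y, x \in Rd m -> y \in Rd n -> x * y \in Rd (m + n)%N),
      (forall x, exists N (f : nat -> R), (forall i, f i \in Rd i) /\ x = \sum_(i < N) f i)
    & (forall N (f : nat -> R), (forall i, f i \in Rd i) -> \sum_(i < N) f i = 0 ->
         forall i, (i < N)%N -> f i = 0)].

(* standard graded: R = R_0[R_1], i.e. R_{n+1} = R_1 R_n *)
Definition standard_graded :=
  forall n x, x \in Rd n.+1 ->
    exists a b : seq R, [/\ size a = size b, (forall i, (i < size a)%N -> a`_i \in Rd 1),
      (forall i, (i < size b)%N -> b`_i \in Rd n)
      & x = \sum_(i < size a) a`_i * b`_i].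

Definition ideal0 (I : {pred R}) :=
  [/\ {subset I <= Rd 0}, 0 \in I, (forall x y, x \in I -> y \in I -> x + y \in I)
    & (forall r x, r \in Rd 0 -> x \in I -> r * x \in I)].

Definition maximal_ideal0 (M : {pred R}) :=
  [/\ ideal0 M, 1 \notin M &
      forall J, ideal0 J -> {subset M <= J} -> 1 \in J \/ {subset J <= M}].

Definition local0 :=
  exists M, maximal_ideal0 M /\
    forall M', maximal_ideal0 M' -> {subset M' <= M} /\ {subset M <= M'}.

Definition artinian0 :=
  forall I : nat -> {pred R}, (forall n, ideal0 (I n)) ->
    (forall n, {subset I n.+1 <= I n}) ->
    exists N, forall n, (N <= n)%N -> {subset I N <= I n}.

Definition Rplus (x : R) :=
  exists N (f : nat -> R), (forall i, f i \in Rd i.+1) /\ x = \sum_(i < N) f i.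

Variable E : lmodType R.

Definition generates (g : seq E) :=
  forall x : E, exists c : nat -> R, x = \sum_(i < size g) c i *: g`_i.

Definition finitely_generated := exists g : seq E, generates g.

Definition in_ann (r : R) := forall x : E, r *: x = 0.

(* dim E = dim R/Ann(E) = 0 : some prime contains Ann(E), and there is no
   strict chain P ⊊ Q of primes containing Ann(E). *)
Definition dim_zero :=
  (exists P, prime_ideal P /\ forall r, in_ann r -> r \in P) /\
  forall P Q, prime_ideal P -> prime_ideal Q ->
    (forall r, in_ann r -> r \in P) -> {subset P <= Q} -> {subset Q <= P}.

Variable Ed : int -> {pred E}.

Definition graded_module :=
  [/\ (forall n, 0 \in Ed n /\ forall x y, x \in Ed n -> y \in Ed n -> x - y \in Ed n),
      (forall (m : nat) (n : int) r x, r \in Rd m -> x \in Ed n -> r *: x \in Ed (m%:Z + n)),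
      (forall x, exists (s : seq int) (f : int -> E),
          (forall i, f i \in Ed i) /\ x = \sum_(i <- s) f i)
    & (forall (s : seq int) (f : int -> E), uniq s -> (forall i, f i \in Ed i) ->
         \sum_(i <- s) f i = 0 -> forall i, i \in s -> f i = 0)].

Definition minimal_homogeneous_generators (g : seq E) (dg : seq int) :=
  [/\ size g = size dg, (forall i, (i < size g)%N -> g`_i \in Ed dg`_i),
      generates g
    & forall i, (i < size g)%N -> ~ generates (take i g ++ drop i.+1 g)].

Definition submodule0 (M : {pred E}) :=
  [/\ 0 \in M, (forall x y, x \in M -> y \in M -> x + y \in M)
    & (forall r x, r \in Rd 0 -> x \in M -> r *: x \in M)].

Definition chain0 (M : {pred E}) (c : nat -> {pred E}) (n : nat) :=
  (forall i, (i <= n)%N -> submodule0 (c i) /\ {subset c i <= M}) /\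
  (forall i, (i < n)%N -> {subset c i <= c i.+1} /\ exists x, x \in c i.+1 /\ x \notin c i).

Definition has_length (M : {pred E}) (n : nat) :=
  (exists c, chain0 M c n) /\ forall c m, chain0 M c m -> (m <= n)%N.

(* x is killed by R_+^k for some k (R_+^k is generated by k-fold products) *)
Definition Rplus_torsion (x : E) :=
  exists k : nat, forall r : seq R, size r = k -> (forall a, a \in r -> Rplus a) ->
    (\prod_(a <- r) a) *: x = 0.

Definition H0_nonzero_at (n : int) :=
  exists x, [/\ x \in Ed n, x != 0 & Rplus_torsion x].

(* a = a_0(E) = sup{n | H^0_{R_+}(E)_n <> 0}, attained *)
Definition is_a0 (a : int) :=
  H0_nonzero_at a /\ forall n, H0_nonzero_at n -> n <= a.

End RingDefs.

(* q = \sum_{i <= d} f i for a function f vanishing in sufficiently low degrees *)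
Definition sum_upto (f : int -> nat) (d : int) (q : nat) :=
  exists lo : int, [/\ lo <= d, (forall i, i < lo -> f i = 0%N)
    & q = (\sum_(0 <= k < `|d - lo|.+1) f (lo + k%:Z)%R)%N].

(* Main.v *)
Require Import Defs.
From mathcomp Require Import all_boot all_order all_algebra zify.
From Stdlib Require Import Classical ClassicalEpsilon.
Set Implicit Arguments. Unset Strict Implicit. Unset Printing Implicit Defensive.
Import Order.TTheory GRing.Theory Num.Theory.
Local Open Scope ring_scope.

Definition toP (T : Type) (P : T -> Prop) : {pred T} :=
  fun z => if excluded_middle_informative (P z) then true else false.
Lemma toPE (T : Type) (P : T -> Prop) z : z \in toP P <-> P z.
Proof. rewrite unfold_in /toP; case: excluded_middle_informative => //. Qed.

Section Help.
Variable R : comNzRingType.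
Variable Rd : nat -> {pred R}.
Variable E : lmodType R.
Variable Ed : int -> {pred E}.
Hypothesis HE : graded_module Rd Ed.

Lemma Ed0 n : (0 : E) \in Ed n.
Proof. by case: HE => H _ _ _; case: (H n). Qed.
Lemma EdB n x y : x \in Ed n -> y \in Ed n -> x - y \in Ed n.
Proof. by case: HE => H _ _ _; case: (H n) => _; apply. Qed.
Lemma EdN n x : x \in Ed n -> - x \in Ed n.
Proof. by move=> Hx; rewrite -sub0r; apply: EdB => //; apply: Ed0. Qed.
Lemma EdD n x y : x \in Ed n -> y \in Ed n -> x + y \in Ed n.
Proof. by move=> Hx Hy; rewrite -[y]opprK; apply: EdB => //; apply: EdN. Qed.
Lemma EdZ (m : nat) n r x : r \in Rd m -> x \in Ed n -> r *: x \in Ed (m%:Z + n).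
Proof. by case: HE => _ H _ _; apply: H. Qed.
Lemma EdZ0 n r x : r \in Rd 0 -> x \in Ed n -> r *: x \in Ed n.
Proof. by move=> Hr Hx; have := EdZ Hr Hx; rewrite add0r. Qed.
Lemma Edsum n (I : Type) (s : seq I) (P : pred I) (F : I -> E) :
  (forall i, P i -> F i \in Ed n) -> \sum_(i <- s | P i) F i \in Ed n.
Proof.
move=> H; apply: (big_ind (fun x => x \in Ed n)) => //; first exact: Ed0.
by move=> ??; apply: EdD.
Qed.

Lemma sum_pred1_seq (I : eqType) (s : seq I) (F : I -> E) i :
  uniq s -> i \in s -> \sum_(m <- s | m == i) F m = F i.
Proof.
move=> us iis; rewrite -big_filter.
have -> : [seq m <- s | m == i] = [:: i] by apply: filter_pred1_uniq.
by rewrite big_seq1.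
Qed.

Lemma homog_part (ts : seq (int * E)) x n :
  (forall p, p \in ts -> p.2 \in Ed p.1) -> x \in Ed n ->
  x = \sum_(p <- ts) p.2 -> x = \sum_(p <- ts | p.1 == n) p.2.
Proof.
move=> Hts Hx Hsum.
pose s := undup (n :: map fst ts).
pose G m := \sum_(p <- ts | p.1 == m) p.2 - (if m == n then x else 0).
have us : uniq s by apply: undup_uniq.
have HG : forall m, G m \in Ed m.
  move=> m; apply: EdB.
    rewrite big_seq_cond; apply: Edsum => p /andP[pin /eqP <-]; exact: Hts.
  by case: eqP => [->|_] //; exact: Ed0.
have sum0 : \sum_(m <- s) G m = 0.
  rewrite /G big_split /= sumrN.
  rewrite (exchange_big_dep xpredT) //=.
  rewrite big_seq_cond (eq_bigr (fun p => p.2)); last first.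
    move=> p /andP[pin _]; rewrite (eq_bigl (fun m => m == p.1)); last by move=> m; rewrite eq_sym.
    rewrite (@sum_pred1_seq _ _ (fun _ => p.2)) //.
    by rewrite mem_undup in_cons; apply/orP; right; apply: map_f.
  rewrite -big_seq_cond.
  rewrite (eq_bigr (fun m => if m == n then x else 0)) //.
  rewrite -big_mkcond /= sum_pred1_seq //; last by rewrite mem_undup mem_head.
  by rewrite -Hsum subrr.
case: HE => _ _ _ Huniq.
have := Huniq s G us HG sum0 n.
rewrite mem_undup mem_head => /(_ isT) /eqP.
by rewrite /G eqxx subr_eq0 => /eqP.
Qed.
End Help.

Section Len.
Variable R : comNzRingType.
Variable Rd : nat -> {pred R}.
Variable E : lmodType R.
Variable Ed : int -> {pred E}.
Hypothesis HE : graded_module Rd Ed.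
Variable len : int -> nat.
Hypothesis Hlen : forall t, has_length Rd (Ed t) (len t).
Variable e : nat.
Hypothesis He : has_length Rd (@predT E) e.

Lemma sub_Ed t : submodule0 Rd (Ed t).
Proof.
split; first exact: (Ed0 HE).
  by move=> x y; apply: (EdD HE).
by move=> r x; apply: (EdZ0 HE).
Qed.

Lemma sub_zero : submodule0 Rd (pred1 (0 : E)).
Proof.
split; first by rewrite inE.
  by move=> x y /eqP -> /eqP ->; rewrite addr0 inE.
by move=> r x _ /eqP ->; rewrite scaler0 inE.
Qed.

Lemma len_ge1 t x : x \in Ed t -> x != 0 -> (1 <= len t)%N.
Proof.
move=> Hx nx; case: (Hlen t) => _ H; pose c : nat -> {pred E} := fun i => if i == 0%N then ((pred1 0 : pred E) : {pred E}) else Ed t.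
apply: (H c 1%N).
split.
  move=> i _; rewrite /c; case: ifP => _.
    split; first exact: sub_zero.
    by move=> z /eqP ->; exact: (Ed0 HE).
  by split; [exact: sub_Ed|].
move=> i; rewrite ltnS leqn0 => /eqP -> /=; split.
  by move=> z /eqP ->; exact: (Ed0 HE).
by exists x; split => //; rewrite inE.
Qed.

Lemma len_nz t : (1 <= len t)%N -> exists x, x \in Ed t /\ x != 0.
Proof.
move=> H1; case: (Hlen t) => [[c [Hc1 Hc2]] _].
case: (Hc2 0%N H1) => _ [x [x1 x0]].
exists x; split; first by case: (Hc1 1%N H1) => _; apply.
apply/eqP => x0'; move: x0; rewrite x0'.
by case: (Hc1 0%N (leq0n _)) => [[H0 _ _] _]; rewrite H0.
Qed.

Definition S lo n (x : E) := exists f : nat -> E,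
  (forall k, f k \in Ed (lo + (k%:Z))) /\ x = \sum_(k < n) f k.

Definition addP (A B : {pred E}) : {pred E} :=
  toP (fun z => exists u v, [/\ u \in A, v \in B & z = u + v]).

Lemma S_add lo n x y : S lo n x -> S lo n y -> S lo n (x + y).
Proof.
move=> [f [Hf ->]] [f' [Hf' ->]]; exists (fun k => f k + f' k); split.
  by move=> k; apply: (EdD HE).
by rewrite big_split.
Qed.

Lemma S_sub lo n : submodule0 Rd (toP (S lo n)).
Proof.
split.
- apply/toPE; exists (fun _ => 0); split; first by move=> k; exact: (Ed0 HE).
  by rewrite big1.
- by move=> x y /toPE Hx /toPE Hy; apply/toPE; apply: S_add.
- move=> r x Hr /toPE [f [Hf ->]]; apply/toPE; exists (fun k => r *: f k); split.
    by move=> k; apply: (EdZ0 HE).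
  by rewrite scaler_sumr.
Qed.

Lemma addP_sub A B : submodule0 Rd A -> submodule0 Rd B -> submodule0 Rd (addP A B).
Proof.
move=> [A0 AD AZ] [B0 BD BZ]; split.
- by apply/toPE; exists 0, 0; rewrite addr0.
- move=> x y /toPE [u [v [Hu Hv ->]]] /toPE [u' [v' [Hu' Hv' ->]]].
  apply/toPE; exists (u + u'), (v + v'); split; [exact: AD|exact: BD|].
  by rewrite addrACA.
- move=> r x Hr /toPE [u [v [Hu Hv ->]]]; apply/toPE; exists (r *: u), (r *: v).
  by split; [exact: AZ|exact: BZ|rewrite scalerDr].
Qed.

Lemma S_disj lo n x : x \in Ed (lo + n%:Z) -> S lo n x -> x = 0.
Proof.
move=> Hx [f [Hf Hs]].
pose ts := [seq (lo + k%:Z, f k) | k <- iota 0 n].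
have Hts : forall p, p \in ts -> p.2 \in Ed p.1.
  by move=> p /mapP [k _ ->] /=.
have Hs' : x = \sum_(p <- ts) p.2.
  by rewrite Hs big_map /= -(big_mkord xpredT f) /index_iota subn0.
rewrite (homog_part HE Hts Hx Hs') big_map big_seq_cond big1 // => k.
rewrite mem_iota add0n => /andP[/andP[_ kn] /eqP H]; exfalso; move: kn H => /=; lia.
Qed.

Lemma S_mono lo n x : S lo n x -> S lo n.+1 x.
Proof.
move=> [f [Hf ->]]; exists (fun k => if (k < n)%N then f k else 0); split.
  by move=> k; case: ifP => _ //; exact: (Ed0 HE).
rewrite big_ord_recr /= ltnn addr0; apply: eq_bigr => i _; by rewrite ltn_ord.
Qed.

Lemma S_top lo n x : x \in Ed (lo + n%:Z) -> S lo n.+1 x.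
Proof.
move=> Hx; exists (fun k => if k == n then x else 0); split.
  by move=> k; case: eqP => [->|_] //; exact: (Ed0 HE).
rewrite big_ord_recr /= eqxx big1 ?add0r // => i _.
by rewrite (ltn_eqF (ltn_ord i)).
Qed.

Lemma chain_sum lo n : exists c, chain0 Rd predT c (\sum_(k < n) len (lo + k%:Z)) /\
   {subset c (\sum_(k < n) len (lo + k%:Z))%N <= toP (S lo n)}.
Proof.
elim: n => [|n [c [[Hc1 Hc2] Hlast]]].
  exists (fun _ => ((pred1 0 : pred E) : {pred E})); rewrite big_ord0; split.
    by split => // i _; split => //; exact: sub_zero.
  move=> z /eqP ->; apply/toPE; exists (fun _ => 0); split; last by rewrite big_ord0.
  by move=> k; exact: (Ed0 HE).
set m := (\sum_(k < n) len (lo + k%:Z))%N in Hc1 Hc2 Hlast *.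
case: (Hlen (lo + n%:Z)) => [[ch [Hch1 Hch2]] _].
set L := len (lo + n%:Z) in Hch1 Hch2.
have chE : forall j, (j <= L)%N -> {subset ch j <= Ed (lo + n%:Z)}.
  by move=> j /Hch1 [].
have ch0 : forall j, (j <= L)%N -> (0 : E) \in ch j.
  by move=> j /Hch1 [[]].
pose c' i := if (i <= m)%N then c i else addP (toP (S lo n)) (ch (i - m)%N).
exists c'; rewrite big_ord_recr /= -/m -/L; split; first split.
- move=> i Hi; rewrite /c'; case: ifP => Him; first exact: Hc1.
  split => //; apply: addP_sub; first exact: S_sub.
  by case: (Hch1 (i - m)%N) => //; lia.
- move=> i Hi; rewrite /c'.
  case: (ltngtP i m) => [Him|Him|Him].
  + by apply: Hc2.
  + idtac.
    have j1 : ((i - m).+1 <= L)%N by lia.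
    case: (Hch2 (i - m)%N j1) => sub [x [x1 x0]].
    rewrite subSn ?(ltnW Him) //; split.
      move=> z /toPE [u [v [Hu Hv ->]]]; apply/toPE; exists u, v; split => //.
      exact: sub.
    exists x; split.
      apply/toPE; exists 0, x; split => //; last by rewrite add0r.
      by case: (S_sub lo n).
    apply/negP => /toPE [u [v [Hu Hv Hx]]].
    have uE : u \in Ed (lo + n%:Z).
      have -> : u = x - v by rewrite Hx addrK.
      apply: (EdB HE); first exact: (chE _ j1 _ x1).
      by apply: (chE (i - m)%N) => //; lia.
    move/toPE: Hu => Hu; have u0 := S_disj uE Hu.
    by move: x0; rewrite Hx u0 add0r Hv.
  + rewrite Him subSn // subnn.
    have j1 : (1 <= L)%N by move: Hi; rewrite Him; lia.
    case: (Hch2 0%N j1) => _ [x [x1 x0]]; split.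
      move=> z Hz; apply/toPE; exists z, 0; split; last by rewrite addr0.
        exact: Hlast.
      exact: ch0.
    exists x; split.
      apply/toPE; exists 0, x; split => //; last by rewrite add0r.
      by case: (S_sub lo n).
    apply/negP => /Hlast /toPE Hs.
    have := S_disj (chE 1%N j1 x x1) Hs => x00.
    by move: x0; rewrite x00 ch0.
- rewrite /c'; case: ifP => HL.
  + have -> : (m + L = m)%N by move: HL; lia.
    move=> z /Hlast /toPE Hz; apply/toPE; exact: S_mono.
  + move=> z /toPE [u [v [/toPE Hu Hv ->]]]; apply/toPE; apply: S_add.
      exact: S_mono.
    apply: S_top; apply: (chE (m + L - m)%N) => //; lia.
Qed.

Lemma sum_len_le lo n : (\sum_(k < n) len (lo + k%:Z) <= e)%N.
Proof.
case: (chain_sum lo n) => c [Hc _]; case: He => _; apply; exact: Hc.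
Qed.
End Len.

Section Gen.
Variable R : comNzRingType.
Variable Rd : nat -> {pred R}.
Hypothesis HR : graded_ring Rd.
Hypothesis Hstd : standard_graded Rd.
Variable E : lmodType R.
Variable Ed : int -> {pred E}.
Hypothesis HE : graded_module Rd Ed.
Variables (g : seq E) (dg : seq int).
Hypothesis Hg : minimal_homogeneous_generators Ed g dg.
Variable d : int.
Hypothesis Hdmax : forall i, i \in dg -> i <= d.

Definition good (p : nat * R * E * int) :=
  [/\ p.1.1.2 \in Rd p.1.1.1, p.1.2 \in Ed p.2 & p.2 <= d].

Lemma decomp_terms x : exists ts : seq (nat * R * E * int),
  (forall p, p \in ts -> good p) /\ x = \sum_(p <- ts) p.1.1.2 *: p.1.2.
Proof.
case: Hg => Hsz Hdeg Hgen _.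
case: (Hgen x) => c ->.
apply: (big_ind (fun z => exists ts : seq (nat * R * E * int),
  (forall p, p \in ts -> good p) /\ z = \sum_(p <- ts) p.1.1.2 *: p.1.2)).
- by exists [::]; rewrite big_nil.
- move=> a b [ts1 [H1 ->]] [ts2 [H2 ->]]; exists (ts1 ++ ts2); split.
    by move=> p; rewrite mem_cat => /orP[]; [apply: H1|apply: H2].
  by rewrite big_cat.
- move=> i _; case: HR => _ _ _ Hdec _.
  case: (Hdec (c i)) => N [f [Hf ->]].
  exists [seq (k, f k, g`_i, dg`_i) | k <- iota 0 N]; split.
    move=> p /mapP [k _ ->]; split => //=.
      by apply: Hdeg; exact: ltn_ord.
    by apply: Hdmax; apply: mem_nth; rewrite -Hsz; exact: ltn_ord.
  rewrite big_map /= scaler_suml -(big_mkord xpredT (fun k => f k *: g`_i)).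
  by rewrite /index_iota subn0.
Qed.

Lemma gap t : d <= t -> (forall y, y \in Ed t -> y = 0) ->
  forall x, x \in Ed (t + 1) -> x = 0.
Proof.
move=> dt Z x Hx.
case: (decomp_terms x) => ts [Hts Hsum].
pose ts' := [seq ((p.1.1.1)%:Z + p.2, p.1.1.2 *: p.1.2) | p <- ts].
have Hts' : forall q, q \in ts' -> q.2 \in Ed q.1.
  move=> q /mapP [p pin ->] /=; case: (Hts p pin) => Hr Hy _.
  exact: (EdZ HE Hr Hy).
have Hs' : x = \sum_(q <- ts') q.2 by rewrite big_map.
rewrite (homog_part HE Hts' Hx Hs') big_map big_seq_cond big1 // => p.
move=> /andP [pin /eqP /= Hdeg].
case: (Hts p pin) => Hr Hy Hd.
move: Hr Hy Hd Hdeg; case: p pin => [[[j r] y] dy] /= _ Hr Hy Hd Hdeg.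
case: j Hr Hdeg => [|m] Hr Hdeg; first by exfalso; move: Hdeg; lia.
case: (Hstd Hr) => a [b [Hab Ha Hb ->]].
rewrite scaler_suml big1 // => l _.
rewrite -scalerA; have -> : b`_l *: y = 0; last by rewrite scaler0.
apply: Z.
have -> : t = m%:Z + dy by move: Hdeg; lia.
apply: (EdZ HE) => //; apply: Hb; rewrite -Hab; exact: ltn_ord.
Qed.

Lemma gen_nz i : (i < size g)%N -> g`_i != 0.
Proof.
move=> ilt; case: Hg => Hsz Hdeg Hgen Hmin.
apply/negP => /eqP g0; apply: (Hmin i ilt) => x.
case: (Hgen x) => c ->.
set g' := take i g ++ drop i.+1 g.
have sz' : size g' = (size g).-1 by rewrite size_cat (size_takel (ltnW ilt)) size_drop; move: ilt; clear; lia.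
pose c' k := if (k < i)%N then c k else c k.+1.
exists c'; rewrite sz'.
rewrite -(big_mkord xpredT (fun k => c k *: g`_k)).
rewrite -(big_mkord xpredT (fun k => c' k *: g'`_k)).
set n := size g in ilt sz' *.
rewrite (big_cat_nat (leq0n i) (ltnW ilt)) (big_ltn ilt) g0 scaler0 /= add0r.
have ile : (i <= n.-1)%N by move: ilt; clear; lia.
rewrite (big_cat_nat (leq0n i) ile); congr (_ + _).
  rewrite !big_nat; apply: eq_bigr => k /andP [_ ki].
  by rewrite /c' ki /g' nth_cat (size_takel (ltnW ilt)) ki nth_take.
rewrite -(addn1 i) big_addn.
have -> : (n - 1 = n.-1)%N by clear; lia.
rewrite !big_nat; apply: eq_bigr => k /andP [ik kn].
rewrite /c' addn1 ltnNge ik /= /g' nth_cat (size_takel (ltnW ilt)).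
rewrite ltnNge ik /= nth_drop; congr (_ *: nth _ _ _); move: ik; clear; lia.
Qed.
End Gen.

Lemma sum_ge (m n : nat) (F : nat -> nat) :
  (forall i, (m <= i < n)%N -> (1 <= F i)%N) -> (n - m <= \sum_(m <= i < n) F i)%N.
Proof.
elim: n => [|n IH] H; first by rewrite sub0n.
case: (leqP m n) => mn.
  rewrite big_nat_recr //=.
  have h1 : (n - m <= \sum_(m <= i < n) F i)%N.
    by apply: IH => i /andP [a b]; apply: H; rewrite a /= ltnW.
  have h2 : (1 <= F n)%N by apply: H; rewrite mn /=.
  move: h1 h2; lia.
by rewrite (_ : n.+1 - m = 0)%N //; apply/eqP; rewrite subn_eq0.
Qed.

Lemma all1 (m n : nat) (F : nat -> nat) :
  (forall i, (m <= i < n)%N -> (1 <= F i)%N) -> (\sum_(m <= i < n) F i <= n - m)%N ->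
  forall i, (m <= i < n)%N -> F i = 1%N.
Proof.
elim: n => [|n IH] H Hs i; first by rewrite ltn0 andbF.
case: (leqP m n) => mn; last by move=> /andP [a b]; exfalso; move: a b mn; lia.
move: Hs; rewrite big_nat_recr //= => Hs.
have H' : forall i, (m <= i < n)%N -> (1 <= F i)%N.
  by move=> j /andP [a b]; apply: H; rewrite a /= ltnW.
have h1 := sum_ge H'.
have h2 : (1 <= F n)%N by apply: H; rewrite mn /=.
move=> /andP [a b]; case: (ltngtP i n) => [lt|gt|->]; last by move: h1 h2 Hs; lia.
  by apply: IH => //; [move: h1 h2 Hs; lia| rewrite a lt].
by exfalso; move: b gt; lia.
Qed.

Lemma psum_mono (f : nat -> nat) m n : (m <= n)%N ->
  (\sum_(i < m) f i <= \sum_(i < n) f i)%N.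
Proof.
move=> mn; rewrite -!(big_mkord xpredT f) (big_cat_nat (leq0n m) mn) /=.
exact: leq_addr.
Qed.

Theorem lemma2p3 (R : comNzRingType) (Rd : nat -> {pred R})
  (HR : graded_ring Rd) (Hstd : standard_graded Rd) (HN : noetherian_ring R)
  (Hloc : local0 Rd) (Hart : artinian0 Rd)
  (E : lmodType R) (Ed : int -> {pred E})
  (HE : graded_module Rd Ed) (Hfg : finitely_generated E) (Hdim : dim_zero E)
  (g : seq E) (dg : seq int) (Hg : minimal_homogeneous_generators Ed g dg)
  (d : int) (Hd : d \in dg) (Hdmax : forall i, i \in dg -> i <= d)
  (len : int -> nat) (Hlen : forall t, has_length Rd (Ed t) (len t))
  (e : nat) (He : has_length Rd (@predT E) e)
  (q : nat) (Hq : sum_upto len d q)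
  (reg : int) (Hreg : is_a0 Rd Ed reg) :
  reg <= d + e%:Z - q%:Z /\
  (reg = d + e%:Z - q%:Z <->
    (forall t : int, d + 1 <= t <= d + e%:Z - q%:Z -> len t = 1%N) /\
    (forall t : int, d + e%:Z - q%:Z + 1 <= t -> len t = 0%N)).
Proof.
case: Hq => lo [lod Hlo0 Hqdef].
have nz_lo : forall t x, x \in Ed t -> x != 0 -> lo <= t.
  move=> t x Hx nx; have := len_ge1 HE Hlen Hx nx.
  by case: (lerP lo t) => // /Hlo0 ->.
have [x0 [x0d x0n]] : exists x, x \in Ed d /\ x != 0.
  case: (Hg) => Hsz Hdeg _ _.
  have jlt : (index d dg < size g)%N by rewrite Hsz index_mem.
  exists g`_(index d dg); split; last exact: (gen_nz Hg jlt).
  by have := Hdeg _ jlt; rewrite nth_index.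
pose P k := exists x, x \in Ed (lo + k%:Z) /\ x != 0.
set a := `|d - lo|%N in Hqdef.
have da : d = lo + a%:Z by rewrite /a; lia.
have Pa : P a by exists x0; rewrite -da.
have [k0 [Pk0 Hk0]] : exists k0, P k0 /\ forall k, P k -> (k <= k0)%N.
  apply: NNPP => Hno.
  have step : forall k, P k -> exists k', (k < k')%N /\ P k'.
    move=> k Pk; apply: NNPP => Hk; apply: Hno; exists k; split => // k' Pk'.
    apply: NNPP => Hkk; apply: Hk; exists k'; split => //; lia.
  have C : forall m, exists k, P k /\ (m <= \sum_(i < k) len (lo + i%:Z)%R)%N.
    elim=> [|m [k [Pk Hm]]]; first by exists a.
    case: (step k Pk) => k' [kk' Pk']; exists k'; split => //.
    have := psum_mono (fun i => len (lo + i%:Z)) kk'.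
    rewrite big_ord_recr /=.
    case: Pk => y [Hy ny]; have := len_ge1 HE Hlen Hy ny.
    move=> h1 h2; apply: (leq_trans _ h2); rewrite -addn1 leq_add //.
  case: (C e.+1) => k [_ Hk]; have := sum_len_le HE Hlen He lo k; move: Hk; lia.
have nz_le : forall t y, y \in Ed t -> y != 0 -> t <= lo + k0%:Z.
  move=> t y Hy ny; have lot := nz_lo t y Hy ny.
  have : P `|t - lo|%N by exists y; rewrite (_ : lo + _ = t) //; lia.
  move/Hk0; lia.
have Zbeyond : forall t, lo + k0%:Z < t -> forall y, y \in Ed t -> y = 0.
  move=> t lt y Hy; apply/eqP/contraT => ny; have := nz_le t y Hy ny; lia.
have regE : reg = lo + k0%:Z.
  case: Hreg => [[x [Hx nx _]] Hmax].
  apply/eqP; rewrite eq_le (nz_le _ _ Hx nx) /=.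
  apply: Hmax; case: Pk0 => y [Hy ny]; exists y; split => //.
  exists 1%N => r sz Hr.
  case: r sz Hr => [|a0 [|? ?]] //= _ Hr.
  rewrite big_seq1.
  case: (Hr a0 (mem_head _ _)) => N [f [Hf ->]].
  rewrite scaler_suml big1 // => i _; apply: (Zbeyond ((i.+1)%:Z + (lo + k0%:Z))).
    lia.
  exact: (EdZ HE).
have ak0 : (a <= k0)%N by apply: Hk0.
have gapZ : forall t, d <= t -> (forall y, y \in Ed t -> y = 0) ->
    forall n : nat, forall y, y \in Ed (t + n%:Z) -> y = 0.
  move=> t dt Zt; elim=> [|n IH]; first by rewrite addr0.
  rewrite (_ : t + n.+1%:Z = (t + n%:Z) + 1); last by lia.
  apply: (gap HR Hstd HE Hg Hdmax) => //; lia.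
have rng : forall k, (a.+1 <= k < k0.+1)%N -> (1 <= len (lo + k%:Z)%R)%N.
  move=> k /andP [ak kk0]; rewrite lt0n; apply/negP => /eqP l0.
  have Zk : forall y, y \in Ed (lo + k%:Z) -> y = 0.
    move=> y Hy; apply/eqP/contraT => ny; have := len_ge1 HE Hlen Hy ny; lia.
  have dk : d <= lo + k%:Z by rewrite da; move: ak; lia.
  have Hz := gapZ _ dk Zk (k0 - k)%N; case: Pk0 => y [Hy ny].
  move: ny; rewrite (Hz y) ?eqxx //.
  by rewrite (_ : _ + _ = lo + k0%:Z) //; move: kk0; lia.
have split_sum : (\sum_(i < k0.+1) len (lo + i%:Z)%R =
    q + \sum_(a.+1 <= i < k0.+1) len (lo + i%:Z)%R)%N.
  rewrite Hqdef -(big_mkord xpredT (fun i => len (lo + i%:Z))).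
  by rewrite (big_cat_nat (leq0n a.+1)).
have Htot := sum_len_le HE Hlen He lo k0.+1.
have Hlow := sum_ge rng.
split.
  rewrite regE da; move: Htot Hlow; rewrite split_sum; lia.
split.
- move=> Hr; split.
  + move=> t /andP [t1 t2].
    have Hs : (\sum_(a.+1 <= i < k0.+1) len (lo + i%:Z)%R <= k0.+1 - a.+1)%N.
      move: Htot Hlow Hr; rewrite split_sum regE da; lia.
    have := all1 rng Hs (i:=`|t - lo|%N).
    rewrite (_ : lo + (`|t - lo|%N)%:Z = t); last by move: t1; rewrite da; lia.
    apply; apply/andP; split; move: t1 t2; rewrite -Hr regE da; lia.
  + move=> t tl; apply/eqP; rewrite -leqn0 leqNgt; apply/negP => /(len_nz Hlen) [y [Hy ny]].
    have lt : lo + k0%:Z < t by move: tl; rewrite -Hr regE; lia.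
    by move: ny; rewrite (Zbeyond t lt y Hy) eqxx.
- move=> [H1 H2].
  have Hi : reg <= d + e%:Z - q%:Z by rewrite regE da; move: Htot Hlow; rewrite split_sum; lia.
  apply/eqP; rewrite eq_le Hi /=; rewrite leNgt; apply/negP => lt.
  have dD : d + 1 <= d + e%:Z - q%:Z by move: lt; rewrite regE da; lia.
  have := H1 (d + e%:Z - q%:Z); rewrite dD lexx => /(_ isT) l1.
  have [y [Hy ny]] : exists y, y \in Ed (d + e%:Z - q%:Z) /\ y != 0.
    by apply: (len_nz Hlen); rewrite l1.
  have := nz_le _ _ Hy ny; move: lt; rewrite regE; lia.
Qed.
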